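(* Let $n\ge 4$ and let $\mathcal M$ be an IP-SEG* model which is an IP-SEG representation of the chordless cycle $C_n$ and contains at least one interval segment. Then the (unique) permutation arc of $\mathcal M$ consists of at least $2$ and at most $4$ permutation segments.
   Context: Let $L_1$ and $L_2$ be two distinct parallel horizontal lines in the plane. A closed straight line segment is an interval segment if both of its endpoints lie on the same line $L_i$, and a permutation segment if one endpoint lies on $L_1$ and the other on $L_2$. An IP-SEG model is a finite family of interval and permutation segments; its intersection graph has one vertex per segment, adjacent iff the segments intersect. An IP-SEG* model is an IP-SEG model in which all interval segments lie on the same line $L_i$. For $m\ge 3$, $C_m$ is the chordless cycle on $v_1,\dots,v_m$ with $v_i$ adjacent to $v_{i+1}$ (indices mod $m$) and no other edges. An IP-SEG representation of $C_m$ is an IP-SEG model with segments $s(v_1),\dots,s(v_m)$ whose intersection graph is $C_m$ with $s(v_i)$ corresponding to $v_i$. A permutation arc is a maximal sequence of cyclically consecutive segments $s(v_i),\dots,s(v_j)$ that are all permutation segments; an interval arc is defined analogously with interval segments. *)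

(* Defs.v *)
From HB Require Import structures.
From mathcomp Require Import all_boot all_order all_algebra.
Set Implicit Arguments. Unset Strict Implicit. Unset Printing Implicit Defensive.
Import Order.TTheory GRing.Theory Num.Theory.
Local Open Scope ring_scope.

Section Geo.
Variable R : realFieldType.

Record seg := Seg { ep1 : R * R; ep2 : R * R }.

Definition on_seg (s : seg) (p : R * R) : Prop :=
  exists t : R, 0 <= t <= 1 /\
    p = ((1 - t) * (ep1 s).1 + t * (ep2 s).1, (1 - t) * (ep1 s).2 + t * (ep2 s).2).

Definition seg_meet (s s' : seg) : Prop := exists p, on_seg s p /\ on_seg s' p.

(* L_1 is the horizontal line y = y1, L_2 is y = y2 *)
Definition interval_seg_on (y : R) (s : seg) : Prop :=
  (ep1 s).2 = y /\ (ep2 s).2 = y /\ ep1 s <> ep2 s.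

Definition interval_seg (y1 y2 : R) (s : seg) : Prop :=
  interval_seg_on y1 s \/ interval_seg_on y2 s.

Definition perm_seg (y1 y2 : R) (s : seg) : Prop :=
  ((ep1 s).2 = y1 /\ (ep2 s).2 = y2) \/ ((ep1 s).2 = y2 /\ (ep2 s).2 = y1).

Definition ipseg_model (I : Type) (y1 y2 : R) (s : I -> seg) : Prop :=
  forall i, interval_seg y1 y2 (s i) \/ perm_seg y1 y2 (s i).

Definition ipseg_star_model (I : Type) (y1 y2 : R) (s : I -> seg) : Prop :=
  ipseg_model y1 y2 s /\
  exists y, (y = y1 \/ y = y2) /\
    forall i, interval_seg y1 y2 (s i) -> interval_seg_on y (s i).

(* s is an IP-SEG representation of C_n (vertices v_1..v_n as 'I_n,
   v_i adjacent to v_{i+1 mod n}) *)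
Definition represents_cycle (n : nat) (s : 'I_n -> seg) : Prop :=
  forall i j : 'I_n, i != j ->
    (seg_meet (s i) (s j) <->
      (val j = ((val i).+1 %% n)%N \/ val i = ((val j).+1 %% n)%N)).

Definition perm_at (n : nat) (y1 y2 : R) (s : 'I_n -> seg) (t : nat) : Prop :=
  forall o : 'I_n, val o = (t %% n)%N -> perm_seg y1 y2 (s o).

Definition perm_arc (n : nat) (y1 y2 : R) (s : 'I_n -> seg) (i k : nat) : Prop :=
  (i < n)%N /\ (0 < k <= n)%N /\
  (forall t, (t < k)%N -> perm_at y1 y2 s (i + t)) /\
  ((k < n)%N -> ~ perm_at y1 y2 s (i + n - 1) /\ ~ perm_at y1 y2 s (i + k)).

End Geo.

(* Main.v *)
Require Import Defs.
From HB Require Import structures.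
From mathcomp Require Import all_boot all_order all_algebra.
From mathcomp Require Import ring lra zify.
From Stdlib Require Classical_Prop.
Import Order.TTheory GRing.Theory Num.Theory.
Local Open Scope ring_scope.

Set Implicit Arguments. Unset Strict Implicit.

Definition isP (R : realFieldType) (yI yO : R) (s : seg R) : Prop :=
  ((ep1 s).2 = yI /\ (ep2 s).2 = yO) \/ ((ep1 s).2 = yO /\ (ep2 s).2 = yI).
Definition pa (R : realFieldType) (yI : R) (s : seg R) : R :=
  if (ep1 s).2 == yI then (ep1 s).1 else (ep2 s).1.
Definition pb (R : realFieldType) (yI : R) (s : seg R) : R :=
  if (ep1 s).2 == yI then (ep2 s).1 else (ep1 s).1.
Definition il (R : realFieldType) (s : seg R) : R :=
  if (ep1 s).1 <= (ep2 s).1 then (ep1 s).1 else (ep2 s).1.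
Definition ir (R : realFieldType) (s : seg R) : R :=
  if (ep1 s).1 <= (ep2 s).1 then (ep2 s).1 else (ep1 s).1.

Lemma il_ir (R : realFieldType) (s : seg R) : il s <= ir s.
Proof. rewrite /il /ir; case: ifP => // h; lra. Qed.

Lemma frac01 (R : realFieldType) (u d : R) : 0 < d -> 0 <= u <= d -> 0 <= u / d <= 1.
Proof.
move=> d0 /andP[u0 ud]; apply/andP; split; first by rewrite divr_ge0 // ltW.
by rewrite ler_pdivrMr // mul1r.
Qed.

Lemma perm_on (R : realFieldType) (yI yO : R) (s : seg R) p : yI != yO -> isP yI yO s ->
  on_seg s p <-> exists t, 0 <= t <= 1 /\
     p = ((1-t) * pa yI s + t * pb yI s, (1-t)*yI + t*yO).
Proof.
move=> hne; case: s => [[x1 z1] [x2 z2]]; rewrite /isP /on_seg /pa /pb /=.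
case=> [[-> ->]|[-> ->]]; first by rewrite eqxx.
rewrite eq_sym (negbTE hne); split=> [[t [ht ->]]|[t [ht ->]]].
- exists (1 - t); split; first lra.
  congr (_, _); ring.
- exists (1 - t); split; first lra.
  congr (_, _); ring.
Qed.

Lemma int_on (R : realFieldType) (yI : R) (s : seg R) p : interval_seg_on yI s ->
  on_seg s p <-> p.2 = yI /\ il s <= p.1 <= ir s.
Proof.
case: s => [[x1 z1] [x2 z2]]; rewrite /interval_seg_on /on_seg /il /ir /=.
move=> [-> [-> hne]].
have hx : x1 != x2 by apply/eqP => e; apply: hne; rewrite e.
split.
- move=> [t [ht ->]] /=; split; first ring.
  case: ifP => h; apply/andP; split; nra.
- case: p => [px py] /= [-> hb].
  case: ifP hb => h hb.
  + have lt : x1 < x2 by rewrite lt_neqAle hx h.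
    exists ((px - x1) / (x2 - x1)); split.
      apply: frac01; lra.
    congr (_, _); last ring.
    field; apply/eqP => e; move: lt; lra.
  + have lt : x2 < x1 by rewrite ltNge h.
    exists ((x1 - px) / (x1 - x2)); split.
      apply: frac01; lra.
    congr (_, _); last ring.
    field; apply/eqP => e; move: lt; lra.
Qed.

Lemma meet_sym (R : realFieldType) (s u : seg R) : seg_meet s u -> seg_meet u s.
Proof. by move=> [p [h1 h2]]; exists p. Qed.

Lemma yeq (R : realFieldType) (yI yO t t' : R) : yI != yO ->
  (1 - t) * yI + t * yO = (1 - t') * yI + t' * yO -> t = t'.
Proof.
move=> hne e.
have : (t - t') * (yO - yI) = 0 by rewrite mulrBl !mulrBr; move: e; lra.
move/eqP; rewrite mulf_eq0 => /orP[|]; rewrite subr_eq0 => /eqP // e2.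
by move: hne; rewrite e2 eqxx.
Qed.

Lemma meet_PP (R : realFieldType) (yI yO : R) (s u : seg R) : yI != yO ->
  isP yI yO s -> isP yI yO u ->
  seg_meet s u <-> exists t, 0 <= t <= 1 /\
    (1 - t) * pa yI s + t * pb yI s = (1 - t) * pa yI u + t * pb yI u.
Proof.
move=> hne hs hu; split.
- move=> [p [/(perm_on p hne hs) [t [ht ->]] /(perm_on _ hne hu) [t' [ht' e]]]].
  case: e => e1 e2; have et := yeq hne e2; subst t'.
  by exists t.
- move=> [t [ht e]]; exists ((1 - t) * pa yI s + t * pb yI s, (1-t)*yI + t*yO); split.
  + by apply/(perm_on _ hne hs); exists t.
  + by apply/(perm_on _ hne hu); exists t; rewrite e.
Qed.

Lemma meet_PI (R : realFieldType) (yI yO : R) (s u : seg R) : yI != yO ->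
  isP yI yO s -> interval_seg_on yI u ->
  seg_meet s u <-> il u <= pa yI s <= ir u.
Proof.
move=> hne hs hu; split.
- move=> [p [/(perm_on p hne hs) [t [ht ->]] /(int_on _ hu) /= [e hb]]].
  have et : t = 0 by apply: (yeq hne); rewrite e; ring.
  by move: hb; rewrite et subr0 mul1r mul0r addr0.
- move=> hb; exists (pa yI s, yI); split.
  + apply/(perm_on _ hne hs); exists 0; split; first lra.
    congr (_,_); ring.
  + by apply/(int_on _ hu).
Qed.

Lemma meet_II (R : realFieldType) (yI : R) (s u : seg R) :
  interval_seg_on yI s -> interval_seg_on yI u ->
  seg_meet s u <-> exists x, il s <= x <= ir s /\ il u <= x <= ir u.
Proof.
move=> hs hu; split.
- move=> [p [/(int_on _ hs) [_ h1] /(int_on _ hu) [_ h2]]]; by exists p.1.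
- move=> [x [h1 h2]]; exists (x, yI); split; by [apply/(int_on _ hs)|apply/(int_on _ hu)].
Qed.

Lemma cross (R : realFieldType) (d1 d2 : R) : ~ (d1 < 0 /\ d2 < 0) -> ~ (0 < d1 /\ 0 < d2) ->
  exists t, 0 <= t <= 1 /\ (1 - t) * d1 + t * d2 = 0.
Proof.
move=> h1 h2.
case: (ltgtP d1 0) => c.
- have d2p : 0 <= d2 by rewrite leNgt; apply/negP => c2; apply: h1.
  exists ((- d1) / (d2 - d1)); split; first by apply: frac01; lra.
  field; apply/eqP => e; lra.
- have d2p : d2 <= 0 by rewrite leNgt; apply/negP => c2; apply: h2.
  exists (d1 / (d1 - d2)); split; first by apply: frac01; lra.
  field; apply/eqP => e; lra.
- exists 0; split; first lra. rewrite c; ring.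
Qed.

Lemma PP_nomeet (R : realFieldType) (yI yO : R) (s u : seg R) : yI != yO ->
  isP yI yO s -> isP yI yO u -> ~ seg_meet s u ->
  (pa yI s < pa yI u /\ pb yI s < pb yI u) \/ (pa yI u < pa yI s /\ pb yI u < pb yI s).
Proof.
move=> hne hs hu hm.
case: (boolP ((pa yI s < pa yI u) && (pb yI s < pb yI u))) => [/andP[a b]|h1]; first by left.
case: (boolP ((pa yI u < pa yI s) && (pb yI u < pb yI s))) => [/andP[a b]|h2]; first by right.
exfalso; apply: hm; apply/(meet_PP hne hs hu).
have c1 : ~ (pa yI s - pa yI u < 0 /\ pb yI s - pb yI u < 0).
  move=> [a b]; move/negP: h1; apply; apply/andP; split; lra.
have c2 : ~ (0 < pa yI s - pa yI u /\ 0 < pb yI s - pb yI u).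
  move=> [a b]; move/negP: h2; apply; apply/andP; split; lra.
have [t [ht e]] := cross c1 c2.
by exists t; split => //; move: e; lra.
Qed.

Lemma PP_sep (R : realFieldType) (yI yO : R) (s u : seg R) : yI != yO ->
  isP yI yO s -> isP yI yO u -> pa yI s < pa yI u -> pb yI s < pb yI u -> ~ seg_meet s u.
Proof.
move=> hne hs hu a b /(meet_PP hne hs hu) [t [/andP[t0 t1] e]].
have : 0 < (1 - t) * (pa yI u - pa yI s) + t * (pb yI u - pb yI s).
  case: (ltP 0 t) => c.
  - have : 0 < t * (pb yI u - pb yI s) by apply: mulr_gt0; lra.
    have : 0 <= (1-t) * (pa yI u - pa yI s) by apply: mulr_ge0; lra.
    lra.
  - have -> : t = 0 by lra.
    rewrite subr0 mul1r mul0r addr0; lra.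
move: e; lra.
Qed.

Definition Rt (R : realFieldType) (yI yO : R) (x s : seg R) : Prop :=
  (isP yI yO s /\ pa yI x < pa yI s /\ pb yI x < pb yI s) \/
  (interval_seg_on yI s /\ pa yI x < il s).
Definition Lt (R : realFieldType) (yI yO : R) (x s : seg R) : Prop :=
  (isP yI yO s /\ pa yI s < pa yI x /\ pb yI s < pb yI x) \/
  (interval_seg_on yI s /\ ir s < pa yI x).

Lemma excl_PI (R : realFieldType) (yI yO : R) (s : seg R) : yI != yO ->
  isP yI yO s -> interval_seg_on yI s -> False.
Proof.
move=> hne [[a b]|[a b]] [c [d _]]; move: hne; rewrite ?a ?b in c d.
- by rewrite -d eqxx.
- by rewrite -c eqxx.
Qed.

Lemma side (R : realFieldType) (yI yO : R) (x s : seg R) : yI != yO ->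
  isP yI yO x -> isP yI yO s \/ interval_seg_on yI s -> ~ seg_meet x s ->
  Rt yI yO x s \/ Lt yI yO x s.
Proof.
move=> hne hx [hs|hs] hm.
- case: (PP_nomeet hne hx hs hm) => [[a b]|[a b]].
  + by left; left.
  + by right; left.
- case: (ltP (pa yI x) (il s)) => c1; first by left; right.
  case: (ltP (ir s) (pa yI x)) => c2; first by right; right.
  by exfalso; apply: hm; apply/(meet_PI hne hx hs); rewrite c1 c2.
Qed.

Lemma side_excl (R : realFieldType) (yI yO : R) (x s : seg R) : yI != yO ->
  Rt yI yO x s -> Lt yI yO x s -> False.
Proof.
move=> hne [[h1 [a b]]|[h1 a]] [[h2 [c d]]|[h2 c]].
- lra.
- exact: (excl_PI hne h1 h2).
- exact: (excl_PI hne h2 h1).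
- have := il_ir s; lra.
Qed.

Lemma side_pres (R : realFieldType) (yI yO : R) (x s u : seg R) : yI != yO ->
  isP yI yO x -> Lt yI yO x s -> Rt yI yO x u -> ~ seg_meet s u.
Proof.
move=> hne hx [[hs [a b]]|[hs a]] [[hu [c d]]|[hu c]].
- apply: (PP_sep hne hs hu); lra.
- move/(meet_PI hne hs hu); lra.
- move/meet_sym/(meet_PI hne hu hs); lra.
- move/(meet_II hs hu) => [z [h1 h2]]; lra.
Qed.

Lemma exmin (R : realFieldType) (f : nat -> R) (n : nat) : (0 < n)%N ->
  exists m, (m < n)%N /\ forall j, (j < n)%N -> f m <= f j.
Proof.
elim: n => [//|k IH] _.
case: k IH => [|k] IH.
  by exists 0%N; split => // j; rewrite ltnS leqn0 => /eqP ->.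
have [m [mk hm]] := IH isT.
case: (lerP (f m) (f k.+1)) => c.
- exists m; split; first by apply: ltnW.
  move=> j; rewrite ltnS leq_eqVlt => /orP[/eqP ->|]; first exact c.
  exact: hm.
- exists k.+1; split => // j; rewrite ltnS leq_eqVlt => /orP[/eqP ->|] //.
  move=> /hm; move: c; lra.
Qed.

Lemma shift (n a b : nat) : (0 < n)%N -> exists d, (d < n)%N /\ ((a + d) %% n = b %% n)%N.
Proof.
move=> n0; exists ((b + (n - a %% n)) %% n)%N; split; first by rewrite ltn_pmod.
rewrite modnDmr -modnDml addnCA subnKC ?modnDr //.
by apply: ltnW; rewrite ltn_pmod.
Qed.

Definition arcQ (Q : nat -> Prop) (n i k : nat) : Prop :=
  (i < n)%N /\ (0 < k <= n)%N /\ (forall t, (t < k)%N -> Q (i + t)%N) /\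
  ((k < n)%N -> ~ Q (i + n - 1)%N /\ ~ Q (i + k)%N).

Lemma arc_unique (Q : nat -> Prop) (n i k : nat) : (0 < n)%N ->
  (forall a b, (a %% n = b %% n)%N -> Q a -> Q b) ->
  arcQ Q n i k -> (k < n)%N ->
  (forall d, (d < n)%N -> Q (i + d)%N -> (d < k)%N) ->
  forall i' k', arcQ Q n i' k' -> i' = i /\ k' = k.
Proof.
move=> n0 Qp [i_n [/andP[k0 kn] [Hin Hend]]] kln Hcov i' k' [i'n [/andP[k'0 k'n] [Hin' Hend']]].
have [nq1 nq2] := Hend kln.
have k'ln : (k' < n)%N.
  rewrite ltn_neqAle k'n andbT; apply/negP => /eqP ek.
  have [d [dn hd]] := shift i' (i + n - 1) n0.
  apply: nq1; apply: Qp hd _; apply: Hin'; by rewrite ek.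
have [mq1 mq2] := Hend' k'ln.
have [d [dn hd]] := shift i i' n0.
have Qd : Q (i + d)%N by apply: Qp (esym hd) _; rewrite -[i']addn0; apply: Hin'.
have dk := Hcov d dn Qd.
have d0 : d = 0%N.
  case: d dn hd Qd dk => [//|d] dn hd Qd dk.
  exfalso; apply: mq1; apply: (Qp (i + d)%N); last by apply: Hin; lia.
  rewrite -(modnDr (i + d) n).
  have -> : (i' + n - 1 = i' + (n - 1))%N by lia.
  rewrite -(modnDml i') -hd modnDml; congr (_ %% _)%N; lia.
move: hd; rewrite d0 addn0 !modn_small // => ei; subst i'.
split => //.
case: (ltngtP k' k) => c //.
- by exfalso; apply: mq2; apply: Hin.
- by exfalso; apply: nq2; apply: Hin'.
Qed.

Lemma core (R : realFieldType) (yI yO : R) (n : nat) (V : nat -> seg R) :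
  yI != yO -> (4 <= n)%N ->
  (forall a b, (a %% n = b %% n)%N -> V a = V b) ->
  (forall t, isP yI yO (V t) \/ interval_seg_on yI (V t)) ->
  (forall t, seg_meet (V t) (V t.+1)) ->
  (forall t e, (2 <= e <= n - 2)%N -> ~ seg_meet (V t) (V (t + e)%N)) ->
  (exists t, ~ isP yI yO (V t)) ->
  exists i k, arcQ (fun t => isP yI yO (V t)) n i k /\ (2 <= k <= 4)%N /\
    (forall i' k', arcQ (fun t => isP yI yO (V t)) n i' k' -> i' = i /\ k' = k).
Proof.
move=> hne n4 Vp Vk Vm Vna [k0 nk0].
pose P := fun t => isP yI yO (V t).
rewrite -/P.
have n0 : (0 < n)%N by lia.
have Vsh : forall a b, a = (b + n)%N -> V a = V b.
  by move=> a b ->; apply: Vp; rewrite modnDr.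
have IP : forall t, ~ P t -> interval_seg_on yI (V t).
  by move=> t h; case: (Vk t).
have Vmp : forall t, seg_meet (V (t + n - 1)%N) (V t).
  move=> t; rewrite -(Vsh (t + n - 1)%N.+1 t); [exact: Vm | lia].
have Vna2 : forall t, ~ seg_meet (V (t + n - 1)%N) (V t.+1).
  move=> t; rewrite -(Vsh (t + n - 1 + 2)%N t.+1); [apply: Vna; lia | lia].
have F2 : forall t, P t -> ~ P (t + n - 1)%N -> ~ P t.+1 -> False.
  move=> t Pt h1 h2; apply: (Vna2 t).
  have b1 := (meet_PI hne Pt (IP _ h1)).1 (meet_sym (Vmp t)).
  have b2 := (meet_PI hne Pt (IP _ h2)).1 (Vm t).
  apply/(meet_II (IP _ h1) (IP _ h2)).
  by exists (pa yI (V t)); split.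
have OSL : forall x, P x -> forall d, (2 + d <= n - 2)%N ->
   (Rt yI yO (V x) (V (x+2))%N -> Rt yI yO (V x) (V (x + (2 + d)))%N) /\
   (Lt yI yO (V x) (V (x+2))%N -> Lt yI yO (V x) (V (x + (2 + d)))%N).
  move=> x Px; elim=> [|d IH] hd; first by rewrite addn0.
  have hd' : (2 + d <= n - 2)%N by lia.
  have [IH1 IH2] := IH hd'.
  have hm : seg_meet (V (x + (2 + d))%N) (V (x + (2 + d.+1))%N).
    have -> : (x + (2 + d.+1) = (x + (2 + d)).+1)%N by lia.
    exact: Vm.
  have s2 := side hne Px (Vk _) (Vna x (2 + d.+1)%N (ltac:(lia))).
  split => h.
  - case: s2 => // hL; exfalso.
    apply: (side_pres hne Px hL (IH1 h)); exact: meet_sym hm.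
  - case: s2 => // hR; exfalso.
    exact: (side_pres hne Px (IH2 h) hR) hm.
pose sig := fun x => Rt yI yO (V x) (V (x + 2)%N).
have OSL2 : forall x e, P x -> (2 <= e <= n - 2)%N ->
    (sig x <-> Rt yI yO (V x) (V (x + e)%N)) /\ (~ sig x <-> Lt yI yO (V x) (V (x + e)%N)).
  move=> x e Px he.
  have ee : e = (2 + (e - 2))%N by lia.
  have [O1 O2] := OSL x Px (e - 2)%N (ltac:(lia)).
  rewrite -ee in O1 O2.
  have s0 := side hne Px (Vk _) (Vna x 2%N (ltac:(lia))).
  split; split.
  - exact: O1.
  - move=> hR; case: s0 => // hL; exfalso; exact: (side_excl hne hR (O2 hL)).
  - move=> ns; case: s0 => [hR|hL]; [by exfalso; apply: ns | exact: O2].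
  - move=> hL hs; exact: (side_excl hne (O1 hs) hL).
have KEY : forall x y e, P x -> P y -> (2 <= e <= n - 2)%N -> (y %% n = (x + e) %% n)%N ->
    (sig x <-> ~ sig y).
  move=> x y e Px Py he hy.
  have Vy : V y = V (x + e)%N by apply: Vp.
  have Vx : V x = V (y + (n - e))%N.
    apply: Vp; rewrite -modnDml hy modnDml -addnA subnKC ?modnDr //; lia.
  have he' : (2 <= n - e <= n - 2)%N by lia.
  have [[O1 O1'] [O2 O2']] := OSL2 x e Px he.
  have [[Q1 Q1'] [Q2 Q2']] := OSL2 y (n - e)%N Py he'.
  case: (side hne Px (Vk _) (Vna x e he)) => h.
  - have L : Lt yI yO (V y) (V (y + (n - e))%N).
      rewrite -Vx; move: (h); rewrite -Vy => -[[_ [a b]]|[hI _]].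
      + by left; split.
      + by exfalso; exact: (excl_PI hne Py hI).
    split => _; [exact: Q2' L | exact: O1' h].
  - have L : Rt yI yO (V y) (V (y + (n - e))%N).
      rewrite -Vx; move: (h); rewrite -Vy => -[[_ [a b]]|[hI _]].
      + by left; split.
      + by exfalso; exact: (excl_PI hne Py hI).
    have := Q1' L; have := O2' h; tauto.
have ARC2 : forall i, P i -> P (i + 1)%N -> ~ P (i + n - 1)%N -> ~ P (i + 2)%N ->
    (sig i <-> ~ sig (i + 1)%N).
  move=> i Pi P1 h1 h2.
  have /andP[K1 K2] := (meet_PI hne Pi (IP _ h1)).1 (meet_sym (Vmp i)).
  have hmJ : seg_meet (V (i + 1)%N) (V (i + 2)%N).
    have -> : (i + 2 = (i + 1).+1)%N by lia.
    exact: Vm.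
  have /andP[J1 J2] := (meet_PI hne P1 (IP _ h2)).1 hmJ.
  have [_ [O2 O2']] := OSL2 i 2%N Pi (ltac:(lia)).
  have [[Q1 Q1'] [Q2 Q2']] := OSL2 (i + 1)%N (n - 2)%N P1 (ltac:(lia)).
  have eK : (i + 1 + (n - 2) = i + n - 1)%N by lia.
  rewrite eK in Q1 Q1' Q2 Q2'.
  split.
  - move=> si s1.
    case: si => [[hP _]|[_ a]]; first by apply: h2.
    case: (Q1 s1) => [[hP _]|[_ b]]; first by apply: h1.
    lra.
  - move=> ns1.
    case: (side hne Pi (Vk _) (Vna i 2%N (ltac:(lia)))) => // hL.
    case: hL => [[hP _]|[_ a]]; first by exfalso; apply: h2.
    case: (Q2 ns1) => [[hP _]|[_ b]]; first by exfalso; apply: h1.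
    exfalso; lra.
have exP : exists t, P t.
  case: (Classical_Prop.classic (exists t, P t)) => // hno; exfalso.
  have AI : forall t, interval_seg_on yI (V t).
    by move=> t; apply: IP => h; apply: hno; exists t.
  have [m [mn hm]] := exmin (fun j => ir (V j)) n0.
  have hmin : forall j, ir (V m) <= ir (V j).
    move=> j; rewrite (Vp j (j %% n)%N) ?modn_mod //; apply: hm; exact: ltn_pmod.
  have [x [/andP[x1 x2] /andP[x3 x4]]] := (meet_II (AI _) (AI _)).1 (Vm m).
  have [y [/andP[y1 y2] /andP[y3 y4]]] := (meet_II (AI _) (AI _)).1 (Vmp m).
  apply: (Vna2 m); apply/(meet_II (AI _) (AI _)); exists (ir (V m)).
  have h1 := hmin (m + n - 1)%N; have h2 := hmin m.+1.
  by split; apply/andP; split; lra.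
have Qp : forall a b, (a %% n = b %% n)%N -> P a -> P b.
  by move=> a b h; rewrite /P (Vp _ _ h).
have start : exists i, (i < n)%N /\ P i /\ ~ P (i + n - 1)%N.
  case: (Classical_Prop.classic (exists i, (i < n)%N /\ P i /\ ~ P (i + n - 1)%N)) => // hno.
  exfalso.
  have step : forall t, ~ P t -> ~ P t.+1.
    move=> t nt Pt1.
    have Pi : P (t.+1 %% n)%N by apply: (Qp t.+1) => //; rewrite modn_mod.
    apply: hno; exists (t.+1 %% n)%N; split; first exact: ltn_pmod.
    split => // hP; apply: nt; apply: (Qp _ _ _ hP).
    have -> : (t.+1 %% n + n - 1 = t.+1 %% n + (n - 1))%N.
      have := ltn_pmod t.+1 n0; lia.
    rewrite modnDml; rewrite -(modnDr t n); congr (_ %% _)%N; lia.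
  have all : forall d, ~ P (k0 + d)%N.
    elim=> [|d IH]; first by rewrite addn0.
    rewrite addnS; exact: step.
  have [j Pj] := exP.
  have [d [dn hd]] := shift k0 j n0.
  apply: (all d); exact: (Qp _ _ (esym hd) Pj).
have [i [i_n [Pi nPi]]] := start.
have P1 : P (i + 1)%N.
  case: (Classical_Prop.classic (P (i + 1)%N)) => // h; exfalso.
  by apply: (F2 i Pi nPi); rewrite -addn1.
have Pe : forall d, P (i + d)%N -> (d < n)%N -> d <> (n - 1)%N.
  by move=> d h dn ed; apply: nPi; move: h; rewrite ed; have -> : (i + (n - 1) = i + n - 1)%N by lia.
case: (Classical_Prop.classic (P (i + 2)%N)) => P2.
case: (Classical_Prop.classic (P (i + 3)%N)) => P3.
- have n5 : (5 <= n)%N.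
    case: (ltngtP n 4) => c; [lia | lia |].
    by exfalso; apply: nPi; rewrite c; have -> : (i + 4 - 1 = i + 3)%N by lia.
  case: (Classical_Prop.classic (P (i + 4)%N)) => P4.
  + exfalso.
    case: (ltngtP n 5) => c; [lia | |].
    * have k1 := KEY i (i + 2)%N 2%N Pi P2 (ltac:(lia)) erefl.
      have k2 := KEY (i + 2)%N (i + 4)%N 2%N P2 P4 (ltac:(lia)) (ltac:(congr (_ %% _)%N; lia)).
      have k3 := KEY i (i + 4)%N 4%N Pi P4 (ltac:(lia)) erefl.
      tauto.
    * by apply: nPi; rewrite c; have -> : (i + 5 - 1 = i + 4)%N by lia.
  + exists i, 4%N; split; last split => //.
    * split => //; split; first lia.
      split; last by move=> _; split.
      move=> [|[|[|[|t]]]] // _; by rewrite ?addn0.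
    * apply: (arc_unique n0 Qp); [| lia |].
      - split => //; split; first lia.
        split; last by move=> _; split.
        move=> [|[|[|[|t]]]] // _; by rewrite ?addn0.
      - move=> d dn Pd; rewrite ltnNge; apply/negP => dk.
        have dn1 := Pe d Pd dn.
        have d4 : d <> 4%N by move=> e; apply: P4; rewrite -e.
        have k1 := KEY i (i + d)%N d Pi Pd (ltac:(lia)) erefl.
        have k2 := KEY (i + 2)%N (i + d)%N (d - 2)%N P2 Pd (ltac:(lia)) (ltac:(congr (_ %% _)%N; lia)).
        have k3 := KEY i (i + 2)%N 2%N Pi P2 (ltac:(lia)) erefl.
        tauto.
- exists i, 3%N; split; last split => //.
  + split => //; split; first lia.
    split; last by move=> _; split.
    move=> [|[|[|t]]] // _; by rewrite ?addn0.
  + apply: (arc_unique n0 Qp); [| lia |].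
    * split => //; split; first lia.
      split; last by move=> _; split.
      move=> [|[|[|t]]] // _; by rewrite ?addn0.
    * move=> d dn Pd; rewrite ltnNge; apply/negP => dk.
      have dn1 := Pe d Pd dn.
      have d3 : d <> 3%N by move=> e; apply: P3; rewrite -e.
      have k1 := KEY i (i + d)%N d Pi Pd (ltac:(lia)) erefl.
      have k2 := KEY (i + 2)%N (i + d)%N (d - 2)%N P2 Pd (ltac:(lia)) (ltac:(congr (_ %% _)%N; lia)).
      have k3 := KEY i (i + 2)%N 2%N Pi P2 (ltac:(lia)) erefl.
      tauto.
- exists i, 2%N; split; last split => //.
  + split => //; split; first lia.
    split; last by move=> _; split.
    move=> [|[|t]] // _; by rewrite ?addn0.
  + apply: (arc_unique n0 Qp); [| lia |].
    * split => //; split; first lia.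
      split; last by move=> _; split.
      move=> [|[|t]] // _; by rewrite ?addn0.
    * move=> d dn Pd; rewrite ltnNge; apply/negP => dk.
      have dn1 := Pe d Pd dn.
      have d2 : d <> 2%N by move=> e; apply: P2; rewrite -e.
      have k1 := KEY i (i + d)%N d Pi Pd (ltac:(lia)) erefl.
      have k2 := KEY (i + 1)%N (i + d)%N (d - 1)%N P1 Pd (ltac:(lia)) (ltac:(congr (_ %% _)%N; lia)).
      have k3 := ARC2 i Pi P1 nPi P2.
      tauto.
Qed.
Unset Implicit Arguments. Set Strict Implicit.

Lemma arcQ_tr (Q Q' : nat -> Prop) n i k : (forall t, Q t <-> Q' t) -> arcQ Q n i k -> arcQ Q' n i k.
Proof.
move=> h [a [b [c d]]]; split => //; split => //; split.
- by move=> t /c /h.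
- by move=> /d [e f]; split => /h.
Qed.

Lemma modcancel (n t a b : nat) : ((t + a) %% n = (t + b) %% n -> a %% n = b %% n)%N.
Proof. by move=> e; apply/eqP; rewrite -(eqn_modDl t); apply/eqP. Qed.

Theorem mainTheorem7 (R : realFieldType) (y1 y2 : R) (n : nat)
  (s : 'I_n -> seg R) :
  y1 != y2 ->
  (4 <= n)%N ->
  ipseg_star_model y1 y2 s ->
  represents_cycle s ->
  (exists i, interval_seg y1 y2 (s i)) ->
  exists i k, perm_arc y1 y2 s i k /\ (2 <= k <= 4)%N /\
    (forall i' k', perm_arc y1 y2 s i' k' -> i' = i /\ k' = k).
Proof.
move=> hne n4 [hmod [y [hy hyI]]] hcyc [j hj].
have n0 : (0 < n)%N by lia.
pose ix := fun t : nat => (Ordinal (ltn_pmod t n0) : 'I_n).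
pose V := fun t => s (ix t).
have [yO [hne' hPeq]] : exists yO, y != yO /\ forall u, perm_seg y1 y2 u <-> isP y yO u.
  case: hy => ->.
  - by exists y2; split => // u.
  - exists y1; split; first by rewrite eq_sym.
    by move=> u; rewrite /perm_seg /isP; tauto.
have ixv : forall (o : 'I_n), ix (val o) = o.
  by move=> o; apply: val_inj; rewrite /= modn_small.
have Vp : forall a b, (a %% n = b %% n)%N -> V a = V b.
  by move=> a b e; rewrite /V; congr s; apply: val_inj.
have hPat : forall t, perm_at y1 y2 s t <-> isP y yO (V t).
  move=> t; split.
  - by move=> h; apply/hPeq; apply: h.
  - move=> h o ho; apply/hPeq.
    by have -> : o = ix t by apply: val_inj.
have Vk : forall t, isP y yO (V t) \/ interval_seg_on y (V t).
  move=> t; case: (hmod (ix t)) => h.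
  - by right; apply: hyI.
  - by left; apply/hPeq.
have Vm : forall t, seg_meet (V t) (V t.+1).
  move=> t; have hx := ltn_pmod t n0.
  have e : ((t %% n).+1 %% n = t.+1 %% n)%N by rewrite -addn1 modnDml addn1.
  apply/(hcyc (ix t) (ix t.+1)); last by left; rewrite /= e.
  apply/negP => /eqP /(congr1 val) /= e2.
  move: e2 hx; rewrite -e; move: (t %% n)%N => x.
  case: (ltngtP x.+1 n) => c.
  - rewrite (modn_small c); lia.
  - lia.
  - rewrite c modnn; lia.
have Vna : forall t e, (2 <= e <= n - 2)%N -> ~ seg_meet (V t) (V (t + e)%N).
  move=> t e he hm.
  have ne : ix t != ix (t + e)%N.
    apply/negP => /eqP /(congr1 val) /= e2.
    have := modcancel n t e 0%N (esym (etrans (congr1 (fun x => x %% n)%N (addn0 t)) e2)).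
    rewrite mod0n modn_small; lia.
  case: ((hcyc _ _ ne).1 hm) => /= e2.
  - move: e2; rewrite -addn1 modnDml => /modcancel; rewrite !modn_small; lia.
  - move: e2; rewrite -addn1 modnDml -addnA -{1}(addn0 t) => /modcancel.
    rewrite mod0n (modn_small (_ : e + 1 < n)%N); lia.
have hni : exists t, ~ isP y yO (V t).
  exists (val j); rewrite /V ixv => hP.
  exact: (excl_PI hne' hP (hyI _ hj)).
have [i [k [ha [hk hu]]]] := core hne' n4 Vp Vk Vm Vna hni.
exists i, k; split; last split => //.
- exact: (@arcQ_tr _ (perm_at y1 y2 s) n i k (fun t => iff_sym (hPat t)) ha).
- move=> i' k' h'; apply: hu.
  exact: (@arcQ_tr (perm_at y1 y2 s) _ n i' k' hPat h').
Qed.
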